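(* For every integer $n\ge 0$, \[ \sum_{k=0}^{n}\Big(-\frac{1}{4}\Big)^k\binom{n}{k}\binom{2k}{k}H_{2k} =\frac{1}{2^{1+2n}}\binom{2n}{n}\{3H_n-4H_{2n}\}. \]
   Context: For an integer $m\ge 0$, $H_m$ denotes the $m$-th harmonic number: $H_0=0$ and $H_m=\sum_{j=1}^m \frac1j$ for $m\ge1$. $\binom{n}{k}$ is the usual binomial coefficient. *)

(* Defs.v *)
From HB Require Import structures.
From mathcomp Require Import all_boot all_order all_algebra.
Set Implicit Arguments. Unset Strict Implicit. Unset Printing Implicit Defensive.
Import Order.TTheory GRing.Theory Num.Theory.
Local Open Scope ring_scope.

Definition harmonic (m : nat) : rat := \sum_(1 <= j < m.+1) (j%:R)^-1.

(* Main.v *)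
Require Import Defs.
From HB Require Import structures.
From mathcomp Require Import all_boot all_order all_algebra.
From mathcomp Require Import ring lra zify.
Import Order.TTheory GRing.Theory Num.Theory.
Local Open Scope ring_scope.

Definition xx : rat := - (1 / 4).
Definition f (n k : nat) : rat := xx ^+ k * ('C(n, k))%:R * ('C(k.*2, k))%:R.

Lemma cenS k : ('C(k.+1.*2, k.+1))%:R = 2 * (k.*2.+1)%:R * ('C(k.*2, k))%:R / (k.+1)%:R :> rat.
Proof.
have H : (k.+1 * 'C(k.+1.*2, k.+1) = 2 * (k.*2.+1 * 'C(k.*2, k)))%N.
  apply/eqP; rewrite -(eqn_pmul2l (ltn0Sn k)); apply/eqP.
  rewrite doubleS.
  have e1 := mul_bin_diag (k.*2.+2) k. 
  have e2 := mul_bin_diag (k.*2.+1) k.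
  rewrite /= in e1 e2.
  have e3 : 'C(k.*2.+1, k.+1) = 'C(k.*2.+1, k).
    have h : (k.*2.+1 - k.+1 = k)%N by rewrite -addnn; lia.
    have := @bin_sub (k.*2.+1) k.+1; rewrite h => ->; rewrite // -addnn; lia.
  rewrite -e1 e2 e3; nia.
have H' : (k.+1)%:R * ('C(k.+1.*2, k.+1))%:R = 2 * (k.*2.+1)%:R * ('C(k.*2, k))%:R :> rat.
  by rewrite -natrM H natrM natrM mulrA.
by rewrite -H' mulrC mulKf // pnatr_eq0.
Qed.

Lemma binR1 n k : ('C(n, k.+1))%:R = (n%:R - k%:R) * ('C(n,k))%:R / (k.+1)%:R :> rat.
Proof.
have H : (k.+1)%:R * ('C(n, k.+1))%:R = (n%:R - k%:R) * ('C(n,k))%:R :> rat.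
  rewrite -natrM mul_bin_left; case: (leqP k n) => hk.
    by rewrite natrM natrB.
  by rewrite bin_small // ?(muln0, mul0r, mulr0, muln0).
by rewrite -H mulrC mulKf // pnatr_eq0.
Qed.

Lemma binR2 n k : ('C(n.+1, k.+1))%:R = (n.+1)%:R * ('C(n,k))%:R / (k.+1)%:R :> rat.
Proof.
have H : (k.+1)%:R * ('C(n.+1, k.+1))%:R = (n.+1)%:R * ('C(n,k))%:R :> rat.
  by rewrite -!natrM -mul_bin_diag.
by rewrite -H mulrC mulKf // pnatr_eq0.
Qed.

Lemma binR3 n k : ('C(n, k))%:R = ((n.+1)%:R - k%:R) * ('C(n.+1,k))%:R / (n.+1)%:R :> rat.
Proof.
have H : (n.+1)%:R * ('C(n, k))%:R = ((n.+1)%:R - k%:R) * ('C(n.+1,k))%:R :> rat.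
  have e := mul_bin_down n.+1 k; rewrite /= in e.
  rewrite -natrM e; case: (leqP k n.+1) => hk.
    by rewrite natrM natrB.
  by rewrite bin_small // ?(muln0, mul0r, mulr0, muln0).
by rewrite -H mulrC mulKf // pnatr_eq0.
Qed.

Definition g (n k : nat) : rat := - 2 * (k%:R) ^+ 2 * f n.+1 k / (n.+1)%:R.

Lemma hom_alg (n k : nat) (D B P : rat) :
  2 * n.+1%:R * (P * D * B) -
  (n * 2).+1%:R * (P * ((n.+1%:R - k%:R) * D / n.+1%:R) * B) =
  -2 * k.+1%:R ^+ 2 *
  (- (1 / 4) * P * (n.+1%:R * ((n.+1%:R - k%:R) * D / n.+1%:R) / k.+1%:R) *
   (2 * (k * 2).+1%:R * B / k.+1%:R)) /
  n.+1%:R - -2 * k%:R ^+ 2 * (P * D * B) / n.+1%:R.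
Proof. by field; rewrite !nat1r !pnatr_eq0. Qed.

Lemma hom n k : 2 * (n.+1)%:R * f n.+1 k - (n.*2.+1)%:R * f n k = g n k.+1 - g n k.
Proof.
rewrite /g /f [xx ^+ k.+1]exprS cenS binR2 (binR3 n k) /xx.
set D : rat := ('C(n.+1, k))%:R; set B : rat := ('C(k.*2, k))%:R.
set P : rat := (- (1/4)) ^+ k; clearbody D B P.
rewrite -!muln2.
exact: hom_alg.
Qed.

Definition u (m j : nat) : rat := j%:R * (4 * j%:R - 1) / (2 * j%:R - 1) * f m j.
Definition cc (m : nat) : rat := m%:R * (2 * m%:R + 1) / (2 * m%:R - 1).
Definition W (m j : nat) : rat :=
  - 2 * j%:R ^+ 2 * (4 * j%:R + 2 * m%:R - 3) / ((2 * m%:R - 1) * (2 * j%:R - 1)) * f m j.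

Lemma two_m1 (j : nat) : (2 * j%:R - 1 : rat) != 0.
Proof. case: j => [|j]; first by []. rewrite -nat1r. have : (0:rat) <= j%:R by []. lra. Qed.

Lemma gos_alg (m j : nat) (D B P : rat) :
  j%:R * (4 * j%:R - 1) / (2 * j%:R - 1) * (P * D * B) +
  m%:R * (2 * m%:R + 1) / (2 * m%:R - 1) * (P * D * B) =
  -2 * j.+1%:R ^+ 2 * (4 * j.+1%:R + 2 * m%:R - 3) /
  ((2 * m%:R - 1) * (2 * j.+1%:R - 1)) *
  (- (1 / 4) * P * ((m%:R - j%:R) * D / j.+1%:R) *
   (2 * (j * 2).+1%:R * B / j.+1%:R)) -
  -2 * j%:R ^+ 2 * (4 * j%:R + 2 * m%:R - 3) /
  ((2 * m%:R - 1) * (2 * j%:R - 1)) * (P * D * B).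
Proof.
have h1 := two_m1 m; have h2 := two_m1 j; have h3 := two_m1 j.+1.
field; rewrite !nat1r h1 h2 h3 pnatr_eq0. by []. Qed.

Lemma gos m j : u m j + cc m * f m j = W m j.+1 - W m j.
Proof.
rewrite /u /W /cc /f [xx ^+ j.+1]exprS binR1 cenS /xx.
set D : rat := ('C(m, j))%:R; set B : rat := ('C(j.*2, j))%:R.
set P : rat := (- (1/4)) ^+ j; clearbody D B P.
rewrite -!muln2. exact: gos_alg.
Qed.

Definition h (k : nat) : rat := harmonic k.*2.

Lemma harmS m : harmonic m.+1 = harmonic m + (m.+1%:R)^-1.
Proof. by rewrite /harmonic big_nat_recr. Qed.

Lemma gd_alg (n k : nat) (F H : rat) :
  - (-2 * k.+1%:R ^+ 2 * F / n.+1%:R) *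
  (H + (k * 2).+1%:R^-1 + (k * 2).+2%:R^-1 - H) =
  k.+1%:R * (4 * k.+1%:R - 1) / (2 * k.+1%:R - 1) * F / n.+1%:R.
Proof.
have k0 : (0:rat) <= k%:R by apply: ler0n.
have n0 : (0:rat) <= n%:R by apply: ler0n.
field; repeat (apply/andP; split); apply: lt0r_neq0; lra.
Qed.

Lemma gd n k : - g n k.+1 * (h k.+1 - h k) = u n.+1 k.+1 / n.+1%:R.
Proof.
rewrite /h /g /u doubleS !harmS.
set F := f n.+1 k.+1; set H := harmonic k.*2; clearbody F H.
rewrite -!muln2. exact: gd_alg.
Qed.

Lemma tele (F : nat -> rat) N : \sum_(k < N) (F k.+1 - F k) = F N - F 0%N.
Proof. by rewrite -(big_mkord xpredT (fun k => F k.+1 - F k)) telescope_sumr. Qed.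

Lemma ext n (w : nat -> rat) : \sum_(k < n.+2) f n k * w k = \sum_(k < n.+1) f n k * w k.
Proof. by rewrite big_ord_recr /= /f bin_small // mulr0n mulr0 !mul0r addr0. Qed.

Lemma ext1 n : \sum_(k < n.+2) f n k = \sum_(k < n.+1) f n k.
Proof.
have := ext n (fun _ => 1).
by under eq_bigr do rewrite mulr1; under [X in _ = X -> _]eq_bigr do rewrite mulr1.
Qed.

Lemma f_big n k : (n < k)%N -> f n k = 0.
Proof. by move=> nk; rewrite /f bin_small // mulr0n mulr0 mul0r. Qed.

Lemma g_end n : g n n.+2 = 0.
Proof. by rewrite /g f_big // mulr0 mul0r. Qed.

Lemma g0 n : g n 0 = 0.
Proof. by rewrite /g expr0n /= mulr0 !mul0r. Qed.

Lemma tval_alg (n : nat) (T C P : rat) :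
  2 * n.+1%:R * T - (n * 2).+1%:R * (C / P) = 0 ->
  T = 2 * (n * 2).+1%:R * C / n.+1%:R / (4 * P).
Proof.
move/eqP; rewrite subr_eq0 => /eqP E.
have n0 : (0:rat) <= n%:R by apply: ler0n.
have -> : T = (n * 2).+1%:R * (C / P) / (2 * n.+1%:R).
  rewrite -E; field; rewrite nat1r pnatr_eq0 //.
case: (eqVneq P 0) => [->|Pn]; first by rewrite !(invr0, mulr0, mul0r).
by field; rewrite Pn nat1r pnatr_eq0.
Qed.

Lemma tval n : \sum_(k < n.+1) f n k = ('C(n.*2, n))%:R / 4 ^+ n.
Proof.
elim: n => [|n IH]; first by rewrite big_ord1 /f /= divr1 !mulr1.
have E : 2 * (n.+1)%:R * \sum_(k < n.+2) f n.+1 k - (n.*2.+1)%:R * \sum_(k < n.+1) f n k = 0.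
  rewrite -(ext1 n) !mulr_sumr -sumrB.
  under eq_bigr do rewrite hom.
  by rewrite tele g_end g0 subrr.
rewrite IH in E.
move: E; rewrite cenS.
set T := \sum_(k < n.+2) f n.+1 k; set C := ('C(n.*2, n))%:R; clearbody T C.
rewrite exprS -!muln2. exact: tval_alg.
Qed.

Lemma W0 m : W m 0 = 0.
Proof. by rewrite /W expr0n /= mulr0 !mul0r. Qed.

Lemma Wend m : W m m.+2 = 0.
Proof. by rewrite /W f_big // mulr0. Qed.

Lemma u0 m : u m 0 = 0.
Proof. by rewrite /u !mul0r. Qed.

Lemma Sgos m : \sum_(j < m.+2) u m j = - cc m * \sum_(j < m.+1) f m j.
Proof.
have : \sum_(j < m.+2) (u m j + cc m * f m j) = 0.
  by under eq_bigr do rewrite gos; rewrite tele Wend W0 subrr.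
rewrite big_split /= -mulr_sumr ext1 => /eqP; rewrite addr_eq0 => /eqP ->.
by rewrite mulNr.
Qed.

Definition S n := \sum_(k < n.+1) f n k * h k.

Lemma Sstep n : 2 * (n.+1)%:R * S n.+1 - (n.*2.+1)%:R * S n
   = - cc n.+1 * (\sum_(k < n.+2) f n.+1 k) / n.+1%:R.
Proof.
rewrite /S -(ext n h) !mulr_sumr -sumrB.
have e : forall k, 2 * (n.+1)%:R * (f n.+1 k * h k) - (n.*2.+1)%:R * (f n k * h k)
   = (g n k.+1 * h k.+1 - g n k * h k) + (- g n k.+1 * (h k.+1 - h k)).
  move=> k; rewrite mulrA [X in _ - X]mulrA -mulrBl hom; ring.
under eq_bigr do rewrite e.
rewrite big_split /= (tele (fun k => g n k * h k)) g_end g0 !mul0r subrr add0r.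
under eq_bigr do rewrite gd.
rewrite -mulr_suml.
have := Sgos n.+1; rewrite big_ord_recl u0 add0r.
move=> H; rewrite -mulr_sumr -H.
by congr (_ / _); apply: eq_bigr => i _; rewrite lift0.
Qed.

Lemma pow2 n : (2 : rat) ^+ (1 + n.*2) = 2 * 4 ^+ n.
Proof. by rewrite exprD expr1 -mul2n exprM expr2 -natrM. Qed.

Lemma harm0 : harmonic 0 = 0.
Proof. by rewrite /harmonic big_geq. Qed.

Lemma main_alg (n : nat) (X C P Hn H2 : rat) :
  2 * n.+1%:R * X - (n * 2).+1%:R * ((2 * P)^-1 * C * (3 * Hn - 4 * H2)) =
  - (n.+1%:R * (2 * n.+1%:R + 1) / (2 * n.+1%:R - 1)) *
  (2 * (n * 2).+1%:R * C / n.+1%:R / (4 * P)) / n.+1%:R ->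
  P != 0 ->
  X =
  (2 * (4 * P))^-1 * (2 * (n * 2).+1%:R * C / n.+1%:R) *
  (3 * (Hn + n.+1%:R^-1) - 4 * (H2 + (n * 2).+1%:R^-1 + (n * 2).+2%:R^-1)).
Proof.
move=> E P0.
have n0 : (0:rat) <= n%:R by apply: ler0n.
have -> : X = ((n * 2).+1%:R * ((2 * P)^-1 * C * (3 * Hn - 4 * H2)) + - (n.+1%:R * (2 * n.+1%:R + 1) / (2 * n.+1%:R - 1)) *
  (2 * (n * 2).+1%:R * C / n.+1%:R / (4 * P)) / n.+1%:R) / (2 * n.+1%:R).
  rewrite -E; field; rewrite nat1r pnatr_eq0 //.
field; rewrite P0 !andbT; repeat (apply/andP; split); apply: lt0r_neq0; lra.
Qed.

Lemma main n : S n = (2 ^+ (1 + n.*2))^-1 * ('C(n.*2, n))%:R * (3 * harmonic n - 4 * harmonic n.*2).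
Proof.
elim: n => [|n IH].
  by rewrite /S big_ord1 /h /= harm0 !(mulr0, subrr, mul0r).
have E := Sstep n.
rewrite IH (tval n.+1) cenS !pow2 in E.
rewrite pow2 doubleS cenS !harmS.
have P0 : (4 : rat) ^+ n != 0 by rewrite expf_neq0.
rewrite /cc !exprS in E *.
move: E P0; clear IH.
set X := S n.+1; set C := ('C(n.*2, n))%:R; set P := (4 : rat) ^+ n.
set Hn := harmonic n; set H2 := harmonic n.*2.
clearbody X C P Hn H2.
rewrite -!muln2. exact: main_alg.
Qed.

Theorem theorem7 (n : nat) :
  \sum_(0 <= k < n.+1)
     (- (1 / 4 : rat)) ^+ k * ('C(n, k))%:R * ('C(k.*2, k))%:R * harmonic k.*2
  = (2 ^+ (1 + n.*2))^-1 * ('C(n.*2, n))%:R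
      * (3 * harmonic n - 4 * harmonic n.*2).
Proof. rewrite big_mkord; exact: main. Qed.
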